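(* If a set of reals $X$ satisfies $\binom{\Omega}{\mathrm T^*}$, then for every $k\ge1$ the power $X^k$ satisfies $\binom{\Omega}{\mathrm T^*}$.
   Context: A set of reals is an infinite topological space homeomorphic to a subset of $\mathbb R$. A cover of a space $X$ is a family $\mathcal U$ of subsets of $X$ with $\bigcup\mathcal U=X$ such that $X\not\subseteq U$ for all $U\in\mathcal U$; it is an $\omega$-cover if every finite subset of $X$ is contained in some member. For a countable cover $\mathcal U=\{U_n\}_{n\in a}$ ($a\subseteq\mathbb N$, enumeration bijective) define $h_{\mathcal U}:X\to P(\mathbb N)$ by $h_{\mathcal U}(x)=\{n\in a: x\in U_n\}$. For $a,b\subseteq\mathbb N$, $a\subseteq^* b$ means $a\setminus b$ is finite. A family $Y$ of infinite subsets of $\mathbb N$ is linearly refinable if for each $y\in Y$ there is an infinite $\hat y\subseteq y$ such that $\{\hat y: y\in Y\}$ is linearly ordered by $\subseteq^*$. A countable cover $\mathcal U$ of $X$ is a $\tau^*$-cover if $h_{\mathcal U}[X]$ consists of infinite sets and is linearly refinable. $\Omega$ denotes the collection of open $\omega$-covers of the space, and $\mathrm T^*$ the collection of countable open $\tau^*$-covers. A space satisfies $\binom{\mathfrak U}{\mathfrak V}$ if every $\mathcal U\in\mathfrak U$ has a subfamily belonging to $\mathfrak V$. *)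

(* Defs.v *)
From HB Require Import structures.
From mathcomp Require Import all_boot all_order all_algebra.
From mathcomp Require Import all_classical all_reals all_analysis.
Set Implicit Arguments. Unset Strict Implicit. Unset Printing Implicit Defensive.
Import Order.TTheory GRing.Theory Num.Theory.
Import numFieldNormedType.Exports.
Local Open Scope classical_set_scope.

Section Covers.
Variable T : topologicalType.

Definition relopen (A U : set T) : Prop := exists O : set T, open O /\ U = O `&` A.

Definition is_cover (A : set T) (F : set (set T)) : Prop :=
  [/\ (forall U, F U -> U `<=` A),
      A `<=` \bigcup_(U in F) U &
      (forall U, F U -> ~ (A `<=` U))].

Definition open_family (A : set T) (F : set (set T)) : Prop :=
  forall U, F U -> relopen A U.

Definition omega_cover (A : set T) (F : set (set T)) : Prop :=
  is_cover A F /\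
  (forall S : set T, finite_set S -> S `<=` A -> exists U, F U /\ S `<=` U).

Definition Omega (A : set T) (F : set (set T)) : Prop :=
  open_family A F /\ omega_cover A F.

Definition hcov (a : set nat) (e : nat -> set T) (x : T) : set nat :=
  [set n | a n /\ e n x].

End Covers.

Definition subset_star (a b : set nat) : Prop := finite_set (a `\` b).

Definition linearly_refinable (Y : set (set nat)) : Prop :=
  exists r : set nat -> set nat,
    (forall y, Y y -> r y `<=` y /\ infinite_set (r y)) /\
    (forall y1 y2, Y y1 -> Y y2 ->
        subset_star (r y1) (r y2) \/ subset_star (r y2) (r y1)).

Section TauStar.
Variable T : topologicalType.

Definition tau_star_cover (A : set T) (F : set (set T)) : Prop :=
  is_cover A F /\
  exists (a : set nat) (e : nat -> set T),
    [/\ (forall n, a n -> F (e n)),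
        (forall m n, a m -> a n -> e m = e n -> m = n),
        (forall U, F U -> exists2 n, a n & e n = U),
        (forall x, A x -> infinite_set (hcov a e x)) &
        linearly_refinable (hcov a e @` A)].

Definition Tstar (A : set T) (F : set (set T)) : Prop :=
  open_family A F /\ tau_star_cover A F.

Definition sel_Omega_Tstar (A : set T) : Prop :=
  forall F, Omega A F -> exists G, G `<=` F /\ Tstar A G.

End TauStar.

(* X^k as a subspace of R^k = 'rV[R]_k (product topology) *)
Definition power_set_rV (R : realType) (X : set R) (k : nat) : set 'rV[R]_k :=
  [set v | forall i : 'I_k, X (v ord0 i)].
Arguments power_set_rV {R} X k.
Arguments sel_Omega_Tstar {T} A.

(* Main.v *)
Require Import Defs.
From HB Require Import structures.
From mathcomp Require Import all_boot all_order all_algebra.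
From mathcomp Require Import all_classical all_reals all_analysis.
Import numFieldNormedType.Exports.
Local Open Scope classical_set_scope.

Lemma sstar_sub (a b : set nat) : a `<=` b -> subset_star a b.
Proof. by move=> ab; rewrite /subset_star; rewrite (_ : a `\` b = set0) //; apply/seteqP; split => // x [/ab]. Qed.

Lemma sstar_trans (a b c : set nat) : subset_star a b -> subset_star b c -> subset_star a c.
Proof.
rewrite /subset_star => fab fbc.
apply: (sub_finite_set (B := (a `\` b) `|` (b `\` c))); last by rewrite finite_setU.
move=> x [ax ncx]; have [bx|nbx] := pselect (b x); [by right|by left].
Qed.

Lemma sstar_image (f : nat -> nat) (a b : set nat) : subset_star a b -> subset_star (f @` a) (f @` b).
Proof.
rewrite /subset_star => fab; apply: (sub_finite_set (B := f @` (a `\` b))); last exact: finite_image.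
move=> y [[x ax <-] nb]; exists x => //; split => // bx; apply: nb; by exists x.
Qed.

Lemma exists_out (I B : set nat) : infinite_set I -> finite_set B -> exists n, I n /\ ~ B n.
Proof.
move=> iI fB; have := infinite_setD iI fB => H.
apply: contrapT => nE; apply: H; rewrite (_ : I `\` B = set0) //.
apply/seteqP; split => // n [In nBn]; apply: nE; by exists n.
Qed.

Lemma seq_fin (T : eqType) (I : set nat) (h : T -> set nat) (s : seq T) :
  (forall t, t \in s -> finite_set (I `\` h t)) ->
  finite_set [set n | I n /\ ~ (forall t, t \in s -> h t n)].
Proof.
elim: s => [|t0 s IH] H.
  rewrite (_ : [set n | _] = set0) //; apply/seteqP; split => // n [_ Hn]; apply: Hn => t; by rewrite in_nil.
apply: (sub_finite_set (B := (I `\` h t0) `|` [set n | I n /\ ~ (forall t, t \in s -> h t n)])).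
  move=> n [In Hn]; have [ht0|nht0] := pselect (h t0 n); last by left.
  right; split => // Hs; apply: Hn => t; rewrite in_cons => /orP [/eqP ->|ts] //; exact: Hs.
rewrite finite_setU; split; first by apply: H; rewrite mem_head.
apply: IH => t ts; apply: H; by rewrite in_cons ts orbT.
Qed.

Lemma seq_min (T : eqType) (P : T -> Prop) (q : T -> set nat) :
  (forall t1 t2, P t1 -> P t2 -> subset_star (q t1) (q t2) \/ subset_star (q t2) (q t1)) ->
  forall s : seq T, s <> [::] -> (forall t, t \in s -> P t) ->
  exists2 t0, t0 \in s & forall t, t \in s -> subset_star (q t0) (q t).
Proof.
move=> Hlin; elim => [//|t1 s IH] _ Hs.
have Pt1 : P t1 by apply: Hs; rewrite mem_head.
case: s IH Hs => [|t2 s'] IH Hs.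
  exists t1; first by rewrite mem_head.
  by move=> t; rewrite mem_seq1 => /eqP ->; apply: sstar_sub.
have [t0 t0s Ht0] : exists2 t0, t0 \in t2 :: s' & forall t, t \in t2 :: s' -> subset_star (q t0) (q t).
  by apply: IH => // t ts; apply: Hs; rewrite in_cons ts orbT.
have Pt0 : P t0 by apply: Hs; rewrite in_cons t0s orbT.
have [H1|H2] := Hlin _ _ Pt1 Pt0.
  exists t1; first by rewrite mem_head.
  move=> t; rewrite in_cons => /orP [/eqP ->|ts]; first exact: sstar_sub.
  exact: sstar_trans H1 (Ht0 _ ts).
exists t0; first by rewrite in_cons t0s orbT.
move=> t; rewrite in_cons => /orP [/eqP ->|ts] //; exact: Ht0.
Qed.

Lemma tube (R : realType) (X : set R) (k : nat) (F : set (set 'rV[R]_k)) :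
  Omega (power_set_rV X k) F -> forall S : set R, finite_set S -> S `<=` X ->
  exists V, [/\ relopen X V, S `<=` V, ~ (X `<=` V) &
    exists Uc, F Uc /\ power_set_rV V k `<=` Uc].
Proof.
move=> [Fop [[FsubA FcovA FnA] Fom]] S fS SX.
have [fs Sfs] := (finite_fsetP).1 fS.
pose s : seq R := finmap.enum_fset fs.
have Sin x : S x <-> x \in s by rewrite Sfs.
pose n := size s.
pose vf (f : {ffun 'I_k -> 'I_n.+1}) : 'rV[R]_k := (\row_i nth 0 s (f i))%R.
have pwSA : power_set_rV S k `<=` power_set_rV X k by move=> v Hv i; apply: SX; apply: Hv.
have finpw : finite_set (power_set_rV S k).
  apply: (sub_finite_set (B := vf @` setT)); last exact: finite_image.
  move=> v Hv; exists [ffun i => inord (index (v ord0 i) s)] => //.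
  apply/rowP => i; rewrite mxE ffunE inordK; last by apply: leqW; rewrite /n index_mem; apply/Sin.
  by rewrite nth_index //; apply/Sin.
have [Uc [FU SU]] := Fom _ finpw pwSA.
have [Oc [Oop UE]] := Fop Uc FU.
have Pf : forall f : {ffun 'I_k -> 'I_n.+1},
    \forall d \near (0%R : R)^'+, (forall i, (f i < n)%N) -> ball (vf f) d `<=` Oc.
  move=> f; have [Hf|Hf] := pselect (forall i, (f i < n)%N); last first.
    by apply: nearW => d Hf'; case: (Hf Hf').
  have Ovf : Oc (vf f).
    have : Uc (vf f) by apply: SU => i; rewrite mxE; apply/Sin; apply: mem_nth; exact: Hf.
    by rewrite UE => -[].
  rewrite openE in Oop; have := Oop _ Ovf; rewrite /interior => /nbhs_ballP [e e0 HeO].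
  apply: filterS (nbhs_right_lt e0) => d de _ w Hw; apply: HeO; apply: le_ball (Order.POrderTheory.ltW de) _ Hw.
have [d [d0 Hd]] := filter_ex (filterI (nbhs_right_gt (0%R : R)) (@filter_forall _ _ _ _ _ Pf)).
pose V := X `&` \bigcup_(j in [set j | (j < n)%N]) ball (nth 0%R s j) d.
have pwVU : power_set_rV V k `<=` Uc.
  move=> w Hw.
  have Hw' i : exists j, (j < n)%N /\ ball (nth 0%R s j) d (w ord0 i).
    by case: (Hw i).2 => j jn Hj; exists j.
  have [g Hg] := choice Hw'.
  pose f : {ffun 'I_k -> 'I_n.+1} := [ffun i => inord (g i)].
  have fE i : nat_of_ord (f i) = g i by rewrite ffunE inordK //; apply: leqW; exact: (Hg i).1.
  have Hf i : (f i < n)%N by rewrite fE; exact: (Hg i).1.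
  have Ow : Oc w.
    apply: (Hd f Hf); split => // i0 j; rewrite (ord1 i0) mxE fE; exact: (Hg j).2.
  by rewrite UE; split => // i; exact: (Hw i).1.
exists V; split.
- exists (\bigcup_(j in [set j | (j < n)%N]) ball (nth 0%R s j) d); split; last by rewrite setIC.
  by apply: bigcup_open => j _; exact: ball_open.
- move=> x Sx; split; first exact: SX.
  exists (index x s); first by rewrite /= index_mem; apply/Sin.
  by rewrite nth_index; [exact: ballxx | apply/Sin].
- move=> XV; apply: (FnA Uc FU) => v Av; apply: pwVU => i; apply: XV; exact: Av.
- by exists Uc.
Qed.
Arguments seq_min {T P q}. Arguments sstar_trans {a b c}. Arguments exists_out {I B}. Arguments tube {R X k F}.

Theorem theorem8p2 (R : realType) (X : set R) :
  infinite_set X ->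
  sel_Omega_Tstar X ->
  forall k : nat, (1 <= k)%N -> sel_Omega_Tstar (power_set_rV X k).
Proof.
move=> Xinf Hsel k k1 F HF.
have [Fop [[FsubA FcovA FnA] Fom]] := HF.
pose A := power_set_rV X k.
pose VV : set (set R) := [set V | relopen X V /\ ~ (X `<=` V) /\
   exists Uc, F Uc /\ power_set_rV V k `<=` Uc].
have OmV : Omega X VV.
  split; first by move=> V [].
  split; first split.
  - by move=> V [[Oc [_ ->]] _] x [].
  - move=> x Xx.
    have [V [Vop xV nXV HU]] := tube HF _ (finite_set1 x) (fun y (yx : y = x) => eq_ind_r X Xx yx).
    by exists V; [split | apply: xV].
  - by move=> V [_ []].
  - move=> S fS SX; have [V [Vop SV nXV HU]] := tube HF _ fS SX; by exists V.
have [G [GV [Gop [[GsubX GcovX GnX] [a [e [Hea Hinj Hsurj Hinf [r [Hr Hlin]]]]]]]]] := Hsel _ OmV.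
pose h := hcov a e.
pose q t := r (h t).
have hY t : X t -> (hcov a e @` X) (h t) by exists t.
have qsub t : X t -> q t `<=` h t := fun Xt => (Hr _ (hY t Xt)).1.
have qinf t : X t -> infinite_set (q t) := fun Xt => (Hr _ (hY t Xt)).2.
have qlin t1 t2 : X t1 -> X t2 -> subset_star (q t1) (q t2) \/ subset_star (q t2) (q t1).
  by move=> X1 X2; exact: Hlin (hY t1 X1) (hY t2 X2).
have eV n : a n -> VV (e n) := fun an => GV _ (Hea n an).
have Hexc : forall n, exists Uc, a n -> F Uc /\ power_set_rV (e n) k `<=` Uc.
  move=> n; have [an|nan] := pselect (a n); last by exists set0.
  have [_ [_ [Uc HUc]]] := eV n an; by exists Uc.
  have [c Hc] := choice Hexc.
pose a' := [set n | a n /\ forall m, a m -> (m < n)%N -> c m <> c n].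
have rep : forall n, a n -> exists m, a' m /\ c m = c n.
  elim/ltn_ind => n IH an.
  have [H|H] := pselect (forall m, a m -> (m < n)%N -> c m <> c n); first by exists n.
  have [m [am mn cmn]] : exists m, [/\ a m, (m < n)%N & c m = c n].
    apply: contrapT => nE; apply: H => m am mn cmn; apply: nE; by exists m.
  have [m' [a'm' cm']] := IH m mn am; exists m'; split => //; by rewrite cm'.
have Hexrho : forall n, exists m, a n -> a' m /\ c m = c n.
  move=> n; have [an|nan] := pselect (a n); last by exists 0%N.
  have [m Hm] := rep n an; by exists m.
  have [rho Hrho] := choice Hexrho.
have inj' m n : a' m -> a' n -> c m = c n -> m = n.
  move=> [am Hm] [an Hn] cmn; case: (ltngtP m n) => [mn|nm|//].
    by case: (Hn m am mn).
  by case: (Hm n an nm).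
pose cs (x : 'rV[R]_k) : seq R := [seq x ord0 i | i <- enum 'I_k].
have csX x : A x -> forall t, t \in cs x -> X t.
  by move=> Ax t /mapP [i _ ->]; exact: Ax.
have csin (x : 'rV[R]_k) (i : 'I_k) : x ord0 i \in cs x by apply: map_f; rewrite mem_enum.
have csne x : cs x <> [::].
  by move=> E; have := csin x (Ordinal k1); rewrite E.
have Hextau : forall x, exists t0, A x -> t0 \in cs x /\
   forall t, t \in cs x -> subset_star (q t0) (q t).
  move=> x; have [Ax|nAx] := pselect (A x); last by exists 0%R.
  have [t0 t0in Ht0] := seq_min qlin _ (csne x) (csX x Ax).
  by exists t0.
  have [tau Htau] := choice Hextau.
pose R0 x := [set n | q (tau x) n /\ forall t, t \in cs x -> h t n].
pose Rr x := rho @` R0 x.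
have R0a x n : A x -> R0 x n -> a n.
  by move=> Ax [_ H]; exact: (H _ (csin x (Ordinal k1))).1.
have Rr_h x : A x -> Rr x `<=` hcov a' c x.
  move=> Ax _ [n Hn <-]; have an := R0a x n Ax Hn; have [a'r cr] := Hrho n an; split => //.
  rewrite cr; apply: (Hc n an).2 => i; exact: ((Hn.2 _ (csin x i)).2).
have R0star x : A x -> subset_star (q (tau x)) (R0 x).
  move=> Ax; have [tin Ht] := Htau x Ax.
  apply: (sub_finite_set (B := [set n | q (tau x) n /\ ~ (forall t, t \in cs x -> h t n)])).
    move=> n [qn nR0]; split => // H; apply: nR0; by split.
  apply: seq_fin => t tin'; apply: (sub_finite_set (B := q (tau x) `\` q t)); last exact: Ht.
  move=> n [qn nh]; split => // qtn; apply: nh; exact: qsub (csX x Ax t tin') _ qtn.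
have R0q x : subset_star (R0 x) (q (tau x)) by apply: sstar_sub => n [].
have Rrlin x1 x2 : A x1 -> A x2 -> subset_star (Rr x1) (Rr x2) \/ subset_star (Rr x2) (Rr x1).
  move=> A1 A2; have X1 := csX x1 A1 _ (Htau x1 A1).1; have X2 := csX x2 A2 _ (Htau x2 A2).1.
  case: (qlin _ _ X1 X2) => H; [left|right]; apply: sstar_image.
    exact: sstar_trans (R0q x1) (sstar_trans H (R0star x2 A2)).
  exact: sstar_trans (R0q x2) (sstar_trans H (R0star x1 A1)).
have Rrinf x : A x -> infinite_set (Rr x).
  move=> Ax finR.
  have [L LE] := (finite_fsetP).1 finR.
  have Hexp : forall m, exists p, Rr x m -> A p /\ ~ c m p.
    move=> m; have [Rm|nRm] := pselect (Rr x m); last by exists 0%R.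
    have Fcm : F (c m).
      case: Rm => n Hn <-; have an := R0a x n Ax Hn; have [a'r cr] := Hrho n an.
      rewrite cr; exact: (Hc n an).1.
    have nsub := FnA _ Fcm.
    apply: contrapT => nE; apply: nsub => v Av; apply: contrapT => ncv; apply: nE; exists v => _; by split.
    have [p Hp] := choice Hexp.
  pose S := cs x ++ flatten [seq cs (p m) | m <- finmap.enum_fset L].
  have SX t : t \in S -> X t.
    rewrite mem_cat => /orP [tin|/flatten_mapP [m mL tin]]; first exact: csX x Ax t tin.
    have Rm : Rr x m by rewrite LE.
    exact: csX (p m) (Hp m Rm).1 t tin.
  have Sne : S <> [::] by rewrite /S; case: (cs x) (csne x).
  have [t0 t0S Ht0] := seq_min qlin _ Sne SX.
  have X0 := SX t0 t0S.
  pose B := [set n | q t0 n /\ ~ (forall t, t \in S -> h t n)] `|` (q t0 `\` q (tau x)).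
  have finB : finite_set B.
    rewrite finite_setU; split.
      apply: seq_fin => t tS; apply: (sub_finite_set (B := q t0 `\` q t)); last exact: Ht0.
      move=> n [qn nh]; split => // qtn; apply: nh; exact: qsub (SX t tS) _ qtn.
    by apply: Ht0; rewrite mem_cat (Htau x Ax).1.
  have [n [qn nBn]] := exists_out (qinf t0 X0) finB.
  have hS : forall t, t \in S -> h t n by apply: contrapT => H; apply: nBn; left; split.
  have qtx : q (tau x) n by apply: contrapT => H; apply: nBn; right; split.
  have R0n : R0 x n by split => // t tin; apply: hS; rewrite mem_cat tin.
  have Rm : Rr x (rho n) by exists n.
  have an := R0a x n Ax R0n; have [a'r cr] := Hrho n an.
  have [Ap ncp] := Hp _ Rm.
  apply: ncp; rewrite cr; apply: (Hc n an).2 => i.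
  have : h (p (rho n) ord0 i) n.
    apply: hS; rewrite mem_cat; apply/orP; right; apply/flatten_mapP; exists (rho n).
      by move: Rm; rewrite LE.
    exact: csin.
  by move=> [].
exists (c @` a'); split.
  move=> _ [m [am _] <-]; exact: (Hc m am).1.
split.
  move=> _ [m [am _] <-]; exact: Fop _ (Hc m am).1.
split.
  split.
  - move=> _ [m [am _] <-]; exact: FsubA _ (Hc m am).1.
  - move=> x Ax.
    have [m Rm] : exists m, Rr x m.
      apply: contrapT => nE; apply: (Rrinf x Ax); rewrite (_ : Rr x = set0) //.
      apply/seteqP; split => // m Rm; apply: nE; by exists m.
    have [a'm cmx] := Rr_h x Ax _ Rm; exists (c m) => //; by exists m.
  - move=> _ [m [am _] <-]; exact: FnA _ (Hc m am).1.
exists a', c; split.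
- move=> n a'n; by exists n.
- exact: inj'.
- move=> _ [n a'n <-]; by exists n.
- move=> x Ax fin; apply: (Rrinf x Ax); exact: sub_finite_set (Rr_h x Ax) fin.
- have Hexxo : forall y, exists x, (hcov a' c @` A) y -> A x /\ hcov a' c x = y.
    move=> y; have [[x Ax <-]|nY] := pselect ((hcov a' c @` A) y); [by exists x | by exists 0%R].
    have [xo Hxo] := choice Hexxo.
  exists (fun y => Rr (xo y)); split.
    move=> y Yy; have [Ax E] := Hxo y Yy; split; [by have := Rr_h _ Ax; rewrite E | exact: Rrinf].
  move=> y1 y2 Y1 Y2; exact: Rrlin (Hxo y1 Y1).1 (Hxo y2 Y2).1.
Qed.
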